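(* A simple binary matroid is chordal if and only if it does not have $U_{3,4}$ as an induced minor.
   Context: A matroid $M$ is chordal if, for each circuit $C$ of $M$ with at least four elements, there are circuits $C_1$ and $C_2$ and an element $e$ such that $C_1\cap C_2=\{e\}$ and $C=(C_1\cup C_2)-e$. An induced minor of $M$ is a matroid obtained from $M$ by a sequence of restrictions to flats and contractions, each contraction followed by simplification. *)

(* Defs.v *)
From mathcomp Require Import all_boot all_order all_algebra.
Set Implicit Arguments. Unset Strict Implicit. Unset Printing Implicit Defensive.
Import GRing.Theory.

Section Matroids.
Variable T : finType.

Definition is_matroid (E : {set T}) (I : {set T} -> bool) : Prop :=
  [/\ (forall X : {set T}, I X -> X \subset E),
      I set0,
      (forall X Y : {set T}, Y \subset X -> I X -> I Y) &
      (forall X Y : {set T}, I X -> I Y -> #|X| < #|Y| ->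
         exists2 y, y \in Y :\: X & I (y |: X))].

Definition rk (I : {set T} -> bool) (X : {set T}) : nat :=
  \max_(Y : {set T} | (Y \subset X) && I Y) #|Y|.

Definition circuit (E : {set T}) (I : {set T} -> bool) (C : {set T}) : Prop :=
  [/\ C \subset E, ~~ I C & forall D : {set T}, D \proper C -> I D].

Definition loop (E : {set T}) (I : {set T} -> bool) (e : T) : Prop :=
  e \in E /\ ~~ I [set e].

Definition parallel (E : {set T}) (I : {set T} -> bool) (e f : T) : Prop :=
  [/\ [&& e \in E, f \in E & e != f], I [set e], I [set f] & ~~ I [set e; f]].

Definition simple (E : {set T}) (I : {set T} -> bool) : Prop :=
  (forall e, ~ loop E I e) /\ (forall e f, ~ parallel E I e f).

Definition flat (E : {set T}) (I : {set T} -> bool) (F : {set T}) : Prop :=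
  F \subset E /\ forall e, e \in E :\: F -> rk I F < rk I (e |: F).

Definition restr (I : {set T} -> bool) (S : {set T}) : {set T} -> bool :=
  fun X => I X && (X \subset S).

Definition contr (E : {set T}) (I : {set T} -> bool) (C : {set T}) :
  {set T} -> bool :=
  fun X => (X \subset E :\: C) && (rk I (X :|: C) == #|X| + rk I C).

(* The simplification is then restr I S. *)
Definition simplification_set (E : {set T}) (I : {set T} -> bool)
  (S : {set T}) : Prop :=
  [/\ S \subset E,
      (forall e, e \in S -> ~ loop E I e),
      (forall e f, e \in S -> f \in S -> ~ parallel E I e f) &
      (forall e, e \in E -> ~ loop E I e -> e \notin S ->
         exists2 f, f \in S & parallel E I e f)].

Inductive induced_minor (E : {set T}) (I : {set T} -> bool) :
  {set T} -> ({set T} -> bool) -> Prop :=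
| im_refl : induced_minor E I E I
| im_flat E' I' (F : {set T}) : induced_minor E I E' I' -> flat E' I' F ->
    induced_minor E I F (restr I' F)
| im_contr E' I' (C S : {set T}) : induced_minor E I E' I' -> C \subset E' ->
    simplification_set (E' :\: C) (contr E' I' C) S ->
    induced_minor E I S (restr (contr E' I' C) S).

Definition isU34 (E : {set T}) (I : {set T} -> bool) : Prop :=
  #|E| = 4 /\ forall X : {set T}, X \subset E -> I X = (#|X| <= 3).

Definition binary (E : {set T}) (I : {set T} -> bool) : Prop :=
  exists (n : nat) (v : T -> 'rV['F_2]_n),
    forall X : {set T}, X \subset E -> I X = free [seq v x | x <- enum X].

Definition chordal (E : {set T}) (I : {set T} -> bool) : Prop :=
  forall C : {set T}, circuit E I C -> 4 <= #|C| ->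
    exists (C1 C2 : {set T}) (e : T), [/\ circuit E I C1, circuit E I C2,
      C1 :&: C2 = [set e] & C = (C1 :|: C2) :\ e].

End Matroids.

(* Main.v *)
Require Import Defs.
From mathcomp Require Import all_boot all_order all_algebra.
From Stdlib Require Import Classical Lia.
From mathcomp Require Import zify.
Set Implicit Arguments. Unset Strict Implicit. Unset Printing Implicit Defensive.
Import GRing.Theory.

Lemma F2_addxx (n : nat) (x : 'rV['F_2]_n) : (x + x = 0)%R.
Proof.
apply/rowP => i; rewrite !mxE.
move: (x ord0 i) => a; case: a => [[|[|m]] Hm] //; apply/val_inj => //.
Qed.

Section Sums.
Variable T : finType.
Variable V : zmodType.
Hypothesis addxx : forall x : V, (x + x = 0)%R.
Variable v : T -> V.
Implicit Types (A B G K X Y Z : {set T}) (x y : V).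
Local Open Scope ring_scope.

Lemma addKx (x y : V) : x + (x + y) = y.
Proof. by rewrite addrA addxx add0r. Qed.
Lemma addxK (x y : V) : (y + x) + x = y.
Proof. by rewrite -addrA addxx addr0. Qed.
Lemma add_eq0 (x y : V) : x + y = 0 -> x = y.
Proof. by move=> H; rewrite -[LHS](addxK y x) H add0r. Qed.

Definition sv (A : {set T}) : V := \sum_(a in A) v a.

Lemma sv0 : sv set0 = 0. Proof. by rewrite /sv big_set0. Qed.
Lemma sv1 (x : T) : sv [set x] = v x. Proof. by rewrite /sv big_set1. Qed.
Lemma svU1 (x : T) A : x \notin A -> sv (x |: A) = v x + sv A.
Proof. by move=> H; rewrite /sv big_setU1. Qed.
Lemma svD1 (x : T) A : x \in A -> sv A = v x + sv (A :\ x).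
Proof. by move=> H; rewrite /sv (big_setD1 _ H). Qed.
Lemma svID A B : sv A = sv (A :&: B) + sv (A :\: B).
Proof. by rewrite /sv; apply: big_setID. Qed.
Lemma svU A B : [disjoint A & B] -> sv (A :|: B) = sv A + sv B.
Proof.
move=> H; rewrite (svID (A :|: B) A) setUK; congr (_ + _).
rewrite setDUl setDv set0U.
have -> : B :\: A = B by apply/setDidPl; rewrite disjoint_sym.
by [].
Qed.
Lemma svSD A B : sv ((A :\: B) :|: (B :\: A)) = sv A + sv B.
Proof.
rewrite svU; last first.
  by rewrite -setI_eq0; apply/eqP/setP=> x; rewrite !inE; case: (x \in A); case: (x \in B).
rewrite (svID A B) (svID B A) setIC.
set a := sv (A :\: B); set b := sv (B :\: A); set c := sv (B :&: A).
by rewrite addrACA addxx add0r.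
Qed.

Definition spanS (K : {set T}) (x : V) : Prop := exists2 A : {set T}, A \subset K & x = sv A.

Lemma span0 K : spanS K 0.
Proof. by exists set0; rewrite ?sub0set ?sv0. Qed.
Lemma spanD K x y : spanS K x -> spanS K y -> spanS K (x + y).
Proof.
move=> [A HA ->] [B HB ->]; exists ((A :\: B) :|: (B :\: A)); last by rewrite svSD.
by rewrite subUset !(subset_trans (subsetDl _ _)).
Qed.
Lemma spanM K K' x : K \subset K' -> spanS K x -> spanS K' x.
Proof. by move=> H [A HA ->]; exists A => //; apply: subset_trans H. Qed.
Lemma spanV K k : k \in K -> spanS K (v k).
Proof. by move=> H; exists [set k]; rewrite ?sub1set ?sv1. Qed.
Lemma spanSum K A : (forall a, a \in A -> spanS K (v a)) -> spanS K (sv A).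
Proof.
move=> H; rewrite /sv; apply: (big_ind (spanS K)); first exact: span0.
  exact: spanD.
exact: H.
Qed.
Lemma spanGen K K' x : (forall k, k \in K' -> spanS K (v k)) -> spanS K' x -> spanS K x.
Proof.
move=> H [A HA ->]; apply: spanSum => a Ha; apply: H; exact: (subsetP HA).
Qed.
Lemma spanDr K x y : spanS K x -> spanS K (x + y) -> spanS K y.
Proof. by move=> H1 H2; rewrite -(addKx x y); apply: spanD. Qed.
Lemma spanDl K x y : spanS K y -> spanS K (x + y) -> spanS K x.
Proof. by move=> H1 H2; rewrite -(addxK y x); apply: spanD. Qed.

Lemma spanU B G x : spanS (B :|: G) x <-> exists2 A : {set T}, A \subset B & spanS G (x + sv A).
Proof.
split.
  move=> [A0 HA0 ->]; exists (A0 :&: B); first exact: subsetIr.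
  rewrite (svID A0 B) addrC addKx; exists (A0 :\: B) => //.
  apply/subsetP => y; rewrite !inE => /andP[Hy1 Hy2].
  by move: (subsetP HA0 y Hy2); rewrite inE (negbTE Hy1).
move=> [A HA HG]; rewrite -(addxK (sv A) x); apply: spanD.
  exact: (spanM (subsetUr B G)).
by apply: spanSum => a Ha; apply: spanV; rewrite inE (subsetP HA a Ha).
Qed.

Lemma spanU1 c G x : spanS (c |: G) x <-> spanS G x \/ spanS G (x + v c).
Proof.
rewrite spanU; split.
  move=> [A]; rewrite subset1 => /orP[] /eqP -> ; rewrite ?sv1 ?sv0 ?addr0; by auto.
move=> [H|H]; [exists set0; rewrite ?sub0set ?sv0 ?addr0 // | exists [set c]; rewrite ?sv1 //].
Qed.

Definition indepG (G X : {set T}) : Prop :=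
  forall Y, Y \subset X -> spanS G (sv Y) -> Y = set0.

Lemma indepG_sub G X X' : X' \subset X -> indepG G X -> indepG G X'.
Proof. by move=> H HX Y HY; apply: HX; apply: subset_trans H. Qed.
Lemma indepG_mon G G' X : G \subset G' -> indepG G' X -> indepG G X.
Proof. by move=> H HX Y HY HG; apply: HX => //; apply: spanM HG. Qed.

Lemma not_indepG G X : ~ indepG G X -> exists Y, [/\ Y \subset X, spanS G (sv Y) & Y != set0].
Proof.
move=> H; apply: NNPP => H'; apply: H => Y HY HG; apply/eqP; apply: negbNE; apply/negP => Hn.
by apply: H'; exists Y.
Qed.

Lemma dep_ext G Y a : indepG G Y -> ~ indepG G (a |: Y) -> spanS (Y :|: G) (v a).
Proof.
move=> HY /not_indepG [Z [HZ HG HZ0]].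
have aZ : a \in Z.
  apply: negbNE; apply/negP => Ha; move/negP: HZ0; apply; apply/eqP; apply: HY => //.
  apply/subsetP => z Hz; move: (subsetP HZ z Hz); rewrite !inE; case/orP => // /eqP Hza.
  by rewrite -Hza Hz in Ha.
move: HG; rewrite (svD1 aZ) => HG.
apply: (spanDl (y := sv (Z :\ a))); last exact: (spanM (subsetUr Y G)).
apply: spanSum => z; rewrite !inE => /andP[Hz1 Hz2]; apply: spanV.
by move: (subsetP HZ z Hz2); rewrite !inE (negbTE Hz1) /= => ->.
Qed.

End Sums.


Lemma set_induction (T : finType) (P : {set T} -> Prop) :
  P set0 -> (forall (x : T) (X : {set T}), x \notin X -> P X -> P (x |: X)) -> forall X, P X.
Proof.
move=> H0 HS X; elim: {X}#|X| {-2}X (leqnn #|X|) => [|m IH] X HX.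
  by move: HX; rewrite leqn0 cards_eq0 => /eqP ->.
case: (set_0Vmem X) => [->//|[x xX]].
rewrite -(setD1K xX); apply: HS; first by rewrite !inE eqxx.
by apply: IH; rewrite -ltnS (cardsD1 x X) xX add1n in HX.
Qed.

Lemma enum_U1 (T : finType) (x : T) (X : {set T}) : x \notin X -> perm_eq (enum (x |: X)) (x :: enum X).
Proof.
move=> H; apply: uniq_perm; first exact: enum_uniq.
  by rewrite /= mem_enum H enum_uniq.
by move=> y; rewrite inE !mem_enum !inE.
Qed.

Section Binary.
Variable T : finType.
Variable n : nat.
Variable v : T -> 'rV['F_2]_n.
Local Notation V := 'rV['F_2]_n.
Local Notation sv := (sv v).
Local Notation spanS := (spanS v).
Local Notation indepG := (indepG v).
Local Open Scope ring_scope.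

Lemma spanS0 (x : V) : spanS set0 x <-> x = 0.
Proof.
split; first by move=> [A]; rewrite subset0 => /eqP -> ->; rewrite sv0.
by move=> ->; apply: span0.
Qed.

Lemma spanF2 (K : {set T}) (x : V) : (x \in <<[seq v k | k <- enum K]>>%VS) <-> spanS K x.
Proof.
elim/set_induction: K x => [|k K kK IH] x.
  by rewrite enum_set0 /= span_nil memv0 spanS0; split => [/eqP|->].
have -> : <<[seq v k | k <- enum (k |: K)]>>%VS = <<v k :: [seq v k | k <- enum K]>>%VS.
  by apply: eq_span; apply: perm_mem; rewrite -map_cons; apply: perm_map; apply: enum_U1.
rewrite span_cons (spanU1 (@F2_addxx n)); split.
  move/memv_addP => [u /vlineP [a ->] [w Hw ->]].
  move: a; case=> [[|[|m]] Hm] //.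
    left; apply/IH; rewrite (_ : Ordinal Hm = 0); last by apply/val_inj.
    by rewrite scale0r add0r.
  right; apply/IH; rewrite (_ : Ordinal Hm = 1); last by apply/val_inj.
  by rewrite scale1r [v k + w]addrC (addxK (@F2_addxx n)).
move=> [/IH H|/IH H]; apply/memv_addP.
  by exists 0; rewrite ?mem0v //; exists x; rewrite ?add0r.
exists (v k); first exact: memv_line.
by exists (x + v k); rewrite // addrC (addxK (@F2_addxx n)).
Qed.

Lemma freeF2 (X : {set T}) : free [seq v x | x <- enum X] <-> indepG set0 X.
Proof.
elim/set_induction: X => [|x X xX IH].
  rewrite enum_set0 /= nil_free; split => // _ Y; rewrite subset0 => /eqP -> //.
rewrite (perm_free (perm_map v (enum_U1 xX))) /= free_cons.
split.
  move/andP => [H1 /IH H2] Y HY /spanS0 H0.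
  case xY: (x \in Y).
    move: H0; rewrite (svD1 _ xY) => /(add_eq0 (@F2_addxx n)) E.
    move/negP: H1; case; apply/spanF2; exists (Y :\ x) => //.
    apply/subsetP => y; rewrite !inE => /andP[H3 H4]; move: (subsetP HY y H4).
    by rewrite !inE (negbTE H3).
  move: (H2 Y) => H5; apply: H5 => //; last by rewrite H0; apply: span0.
  idtac.
  apply/subsetP => y Hy; move: (subsetP HY y Hy); rewrite !inE.
  by case/orP => // /eqP E; rewrite E xY in Hy.
move=> H; apply/andP; split; last by apply/IH; apply: (indepG_sub _ H); apply: subsetUr.
apply/negP => /spanF2 [A HA E].
have xA : x \notin A by apply/negP => /(subsetP HA); rewrite (negbTE xX).
have := H (x |: A); rewrite svU1 // -E F2_addxx => H'.
have : x |: A = set0 by apply: H'; [apply: setUS | apply: span0].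
by move/setP => /(_ x); rewrite !inE eqxx.
Qed.

End Binary.


Section Rank.
Variable T : finType.
Implicit Types (X Y : {set T}) (I : {set T} -> bool).

Lemma rk_ge I X Y : Y \subset X -> I Y -> #|Y| <= rk I X.
Proof. by move=> H1 H2; rewrite /rk; apply: (@leq_bigmax_cond _ _ _ Y); rewrite H1 H2. Qed.

Lemma rk_le I X m : (forall Y, Y \subset X -> I Y -> #|Y| <= m) -> rk I X <= m.
Proof. by move=> H; rewrite /rk; apply/bigmax_leqP => Y /andP[H1 H2]; apply: H. Qed.

Lemma rk_att I X : I set0 -> exists Y, [/\ Y \subset X, I Y & #|Y| = rk I X].
Proof.
move=> H0.
have : 0 < #|[pred Y : {set T} | (Y \subset X) && I Y]|.
  by apply/card_gt0P; exists set0; rewrite inE sub0set H0.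
move/(eq_bigmax_cond (fun Y : {set T} => #|Y|)) => [Y]; rewrite inE => /andP[H1 H2] H3.
by exists Y; split => //; rewrite /rk -H3.
Qed.
End Rank.

Section Main.
Variable T : finType.
Variable V : zmodType.
Hypothesis addxx : forall x : V, (x + x = 0)%R.
Variable v : T -> V.
Local Notation sv := (sv v).
Local Notation spanS := (spanS v).
Local Notation indepG := (indepG v).
Implicit Types (A B C D E F G K S X Y Z : {set T}) (I : {set T} -> bool).

Definition rep E I G := forall X, I X <-> X \subset E /\ indepG G X.

Lemma indep1 G f : indepG G [set f] <-> ~ spanS G (v f).
Proof.
split.
  move=> H Hs; have := H [set f] (subxx _); rewrite sv1 => /(_ Hs) /setP /(_ f).
  by rewrite !inE eqxx.
move=> H Y; rewrite subset1 => /orP[] /eqP -> //; rewrite sv1 => /H [].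
Qed.

Lemma rep_set0 E I G : rep E I G -> I set0.
Proof. by move=> H; apply/H; split; [apply: sub0set | move=> Y; rewrite subset0 => /eqP]. Qed.

Lemma rep_indep E I G X : rep E I G -> I X -> indepG G X.
Proof. by move=> H /H []. Qed.

Lemma basis_span E I G K B : rep E I G -> K \subset E -> B \subset K -> I B ->
  #|B| = rk I K -> forall k, k \in K -> spanS (B :|: G) (v k).
Proof.
move=> HR KE BK IB HB k kK.
case kB: (k \in B); first by apply: spanV; rewrite inE kB.
apply: dep_ext => //; first exact: (rep_indep HR IB).
move=> Hi.
have : I (k |: B).
  apply/HR; split => //; apply: subset_trans KE; by rewrite subUset sub1set kK BK.
move/(rk_ge (X := K)); rewrite subUset sub1set kK BK => /(_ isT).
by rewrite cardsU1 kB -HB add1n ltnn.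
Qed.

Lemma restr_rep E I G F : rep E I G -> F \subset E -> rep F (restr I F) G.
Proof.
move=> H FE X; rewrite /restr; split.
  by move=> /andP[/H [_ H1] H2]; split.
by move=> [H1 H2]; apply/andP; split => //; apply/H; split => //; apply: subset_trans FE.
Qed.


Lemma rep_sub E I G Y Z : rep E I G -> I Y -> Z \subset Y -> I Z.
Proof.
move=> HR /HR [H1 H2] H3; apply/HR; split; first exact: subset_trans H1.
exact: indepG_sub H2.
Qed.

Lemma rep_sub' E I G Y : rep E I G -> I Y -> Y \subset E.
Proof. by move=> HR /HR []. Qed.

Lemma contr_rep E I G C : rep E I G -> C \subset E -> rep (E :\: C) (contr E I C) (C :|: G).
Proof.
move=> HR CE X; rewrite /contr.
have I0 := rep_set0 HR.
have [B [BC IB HB]] := rk_att C I0.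
have upper : rk I (X :|: C) <= #|X| + rk I C.
  apply: rk_le => Y HY IY.
  rewrite -(cardsID X Y); apply: leq_add; first by apply: subset_leq_card; apply: subsetIr.
  apply: rk_ge; last by apply: (rep_sub HR IY); apply: subsetDl.
  apply/subsetP => y; rewrite inE => /andP[H1 H2]; move: (subsetP HY y H2).
  by rewrite inE (negbTE H1).
split.
  move=> /andP[HX /eqP Hrk]; split => //.
  have [Y0 [HY0 IY0 HcY0]] := rk_att (X :|: C) I0.
  have H1 : #|Y0 :&: X| <= #|X| by apply: subset_leq_card; apply: subsetIr.
  have H2 : #|Y0 :\: X| <= rk I C.
    apply: rk_ge; last by apply: (rep_sub HR IY0); apply: subsetDl.
    apply/subsetP => y; rewrite inE => /andP[H1' H2']; move: (subsetP HY0 y H2').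
    by rewrite inE (negbTE H1').
  have H3 : #|Y0 :&: X| + #|Y0 :\: X| = #|X| + rk I C by rewrite cardsID HcY0.
  have E1 : #|Y0 :&: X| = #|X|.
    apply/eqP; rewrite eqn_leq H1 /=; move: H3 H2; clear; lia.
  have E2 : #|Y0 :\: X| = rk I C by move: H3 E1; clear; lia.
  have XY0 : X \subset Y0.
    have := subset_cardP E1; rewrite subsetIr => /(_ isT) => HE.
    apply/subsetP => x Hx; have := HE x; rewrite !inE Hx andbT => -> //.
  set B' := Y0 :\: X.
  have B'C : B' \subset C.
    apply/subsetP => y; rewrite inE => /andP[H1' H2']; move: (subsetP HY0 y H2').
    by rewrite inE (negbTE H1').
  have IB' : I B' by apply: (rep_sub HR IY0); apply: subsetDl.
  have Hsp := basis_span HR CE B'C IB' E2.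
  move=> Y HYX HYs.
  have : spanS (B' :|: G) (sv Y).
    apply: (spanGen addxx _ HYs) => k; rewrite inE => /orP[kC|kG]; first exact: Hsp.
    by apply: spanV; rewrite inE kG orbT.
  move/(spanU addxx) => [A HA HAs].
  have XC : [disjoint X & C].
    rewrite disjoints_subset; apply/subsetP => x Hx; move: (subsetP HX x Hx).
    by rewrite !inE => /andP[].
  have YA : [disjoint Y & A].
    apply: (disjointWl HYX); apply: (disjointWr _ XC); exact: subset_trans HA B'C.
  have := (rep_indep HR IY0) (Y :|: A).
  rewrite (svU v YA) => /(_ _ HAs) H.
  have : Y :|: A = set0.
    apply: H; rewrite subUset (subset_trans HYX XY0) /=.
    by apply: subset_trans HA _; apply: subsetDl.
  by move/eqP; rewrite setU_eq0 => /andP[/eqP].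
move=> [HX HXi]; rewrite HX /=; apply/eqP/anti_leq; rewrite upper /=.
have XC : [disjoint X & C].
  rewrite disjoints_subset; apply/subsetP => x Hx; move: (subsetP HX x Hx).
  by rewrite !inE => /andP[].
have XB : [disjoint X & B] by apply: (disjointWr BC XC).
have E3 : #|X :|: B| = #|X| + #|B| by rewrite -cardsUI (disjoint_setI0 XB) cards0 addn0.
rewrite -HB -E3; apply: rk_ge; first by apply: setUS.
apply/HR; split.
  rewrite subUset (subset_trans HX (subsetDl _ _)) /=; exact: subset_trans BC CE.
move=> Y HY HYs.
have HYX : Y :&: X = set0.
  apply: HXi; first exact: subsetIr.
  rewrite (svID v Y X) in HYs.
  apply: (spanDl addxx (y := sv (Y :\: X))).
    apply: (spanSum addxx) => y; rewrite inE => /andP[H1 H2]; apply: spanV.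
    move: (subsetP HY y H2); rewrite !inE (negbTE H1) /= => yB.
    by rewrite (subsetP BC y yB).
  by apply: (spanM _ HYs); apply: subsetUr.
apply: (rep_indep HR IB) => //.
apply/subsetP => y Hy; move: (subsetP HY y Hy); rewrite inE => /orP[] // yX.
by move/setP: HYX => /(_ y); rewrite !inE Hy yX.
Qed.

Lemma flat_closed E I G F f A : rep E I G -> flat E I F -> f \in E -> A \subset F ->
  spanS G (v f + sv A) -> f \in F.
Proof.
move=> HR [FE Hfl] fE AF Hs; apply: NNPP => /negP fF.
have := Hfl f; rewrite inE fF fE => /(_ isT); apply/negP; rewrite -leqNgt.
apply: rk_le => Y HY IY.
case fY: (f \in Y); last first.
  apply: rk_ge => //; apply/subsetP => y Hy; move: (subsetP HY y Hy); rewrite !inE.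
  by case/orP => // /eqP E0; rewrite E0 fY in Hy.
set Y' := Y :\ f.
have IY' : I Y' by apply: (rep_sub HR IY); apply: subsetDl.
have Y'F : Y' \subset F.
  apply/subsetP => y; rewrite !inE => /andP[H1 H2]; move: (subsetP HY y H2).
  by rewrite !inE (negbTE H1).
have [a [aA aY' Ia]] : exists a, [/\ a \in A, a \notin Y' & I (a |: Y')].
  apply: NNPP => Hn.
  have Ha : forall a, a \in A -> spanS (Y' :|: G) (v a).
    move=> a aA; case aY': (a \in Y'); first by apply: spanV; rewrite inE aY'.
    apply: (dep_ext addxx (rep_indep HR IY')) => Hi; apply: Hn; exists a; split => //.
      by rewrite aY'.
    apply/HR; split => //; rewrite subUset sub1set (subsetP FE a (subsetP AF a aA)) /=.
    exact: subset_trans Y'F FE.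
  have : spanS (Y' :|: G) (v f).
    apply: (spanDl addxx (y := sv A)); first exact: (spanSum addxx).
    by apply: (spanM _ Hs); apply: subsetUr.
  move/(spanU addxx) => [A' HA' HA's].
  have fA' : f \notin A' by apply/negP => /(subsetP HA'); rewrite !inE eqxx.
  have := (rep_indep HR IY) (f |: A'); rewrite (svU1 v fA') => /(_ _ HA's).
  have H : f |: A' \subset Y.
    by rewrite subUset sub1set fY /=; apply: subset_trans HA' _; apply: subsetDl.
  by move=> /(_ H) /setP /(_ f); rewrite !inE eqxx.
have : #|a |: Y'| = #|Y| by rewrite cardsU1 aY' (cardsD1 f Y) fY.
move=> <-; apply: rk_ge => //.
by rewrite subUset sub1set (subsetP AF a aA).
Qed.

Lemma circ_extract G X : ~ indepG G X -> exists Z, [/\ Z \subset X, Z != set0,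
  spanS G (sv Z) & forall Z', Z' \proper Z -> indepG G Z'].
Proof.
move=> H; have [Y [HY HYs HY0]] := not_indepG H.
elim: {Y}#|Y| {-2}Y (leqnn #|Y|) HY HYs HY0 => [|m IH] Y Hc HY HYs HY0.
  by move: Hc; rewrite leqn0 cards_eq0 (negbTE HY0).
case: (classic (forall Z', Z' \proper Y -> indepG G Z')) => Hall.
  by exists Y; split.
have [Z' HZ'p HZ'] : exists2 Z' : {set T}, Z' \proper Y & ~ indepG G Z'.
  apply: NNPP => Hn; apply: Hall => Z' HZ'; apply: NNPP => HZ''; apply: Hn; exists Z' => //.
have [Y1 [HY1 HY1s HY10]] := not_indepG HZ'.
apply: (IH Y1) => //.
  have := leq_ltn_trans (subset_leq_card HY1) (proper_card HZ'p).
  by move: Hc; clear; lia.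
exact: subset_trans HY1 (subset_trans (proper_sub HZ'p) HY).
Qed.

End Main.


Section SCsec.
Variable T : finType.
Variable V : zmodType.
Hypothesis addxx : forall x : V, (x + x = 0)%R.
Variable v : T -> V.
Local Notation sv := (sv v).
Local Notation spanS := (spanS v).
Local Notation indepG := (indepG v).
Local Notation rep := (rep v).
Implicit Types (A B C D E F G K S X Y Z : {set T}) (I : {set T} -> bool).
Local Open Scope ring_scope.

Definition circG G E D := [/\ D \subset E, spanS G (sv D) & forall D', D' \proper D -> indepG G D'].
Definition chordG G E D f := [/\ f \in E, f \notin D, ~ spanS G (v f),
  (forall d, d \in D -> ~ spanS G (v f + v d)) & exists2 A : {set T}, A \subset D & spanS G (v f + sv A)].
Definition SC E G := forall D, circG G E D -> (3 < #|D|)%N -> exists f, chordG G E D f.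

Lemma chain G x y z : spanS G (x + y) -> spanS G (y + z) -> spanS G (x + z).
Proof. by move=> H1 H2; have := spanD addxx H1 H2; rewrite addrA (addxK addxx). Qed.

Lemma spanC G x y : spanS G (x + y) -> spanS G (y + x).
Proof. by rewrite addrC. Qed.

Lemma spanGc G c x : spanS G x -> spanS (c |: G) x.
Proof. by apply: spanM; apply: subsetUr. Qed.

Lemma toggle D A d : A \subset D -> d \in D -> exists2 A' : {set T}, A' \subset D & sv A' = sv A + v d.
Proof.
move=> AD dD; case dA: (d \in A).
  exists (A :\ d); first by apply: subset_trans AD; apply: subsetDl.
  by rewrite (svD1 v dA) addrC addrA addxx add0r.
exists (d |: A); first by rewrite subUset sub1set dD.
by rewrite (svU1 v (negbT dA)) addrC.
Qed.

Lemma case1 E G c D : ~ spanS G (v c) -> SC E G -> D \subset E :\ c -> circG G E D ->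
  (3 < #|D|)%N -> (forall A, A \subset D -> ~ spanS G (v c + sv A)) ->
  exists f, chordG (c |: G) (E :\ c) D f.
Proof.
move=> Hc HSC DEc HD H4 HA.
have [f [fE fD fl fp [A AD As]]] := HSC D HD H4.
have fc : f != c by apply/eqP => E0; apply: (HA A AD); rewrite -E0.
exists f; split.
- by rewrite !inE fc fE.
- exact: fD.
- move/(spanU1 addxx) => [//|H]; apply: (HA A AD); exact: chain (spanC H) As.
- move=> d dD /(spanU1 addxx) [H|H]; first exact: (fp d dD).
  have [A' A'D HA'] := toggle AD dD.
  apply: (HA A' A'D); rewrite HA'.
  have E0 : (v c + v d) + v f = (v f + v d) + v c by rewrite addrC [v c + v d]addrC addrA.
  rewrite -E0 in H; have := chain H As.
  by rewrite [sv A + v d]addrC addrA [v c + v d + sv A]addrC [sv A + (v c + v d)]addrC.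
- by exists A => //; apply: spanGc.
Qed.

Lemma spanL G c x : spanS G (v c) -> (spanS (c |: G) x <-> spanS G x).
Proof.
move=> Hc; split; last exact: spanGc.
by move/(spanU1 addxx) => [//|H]; apply: (spanDl addxx Hc).
Qed.


Lemma setD1_notin A (c : T) : c \notin A -> A :\ c = A.
Proof. by move=> cA; apply/setP => x; rewrite !inE; case: eqP => // ->; rewrite (negbTE cA). Qed.

Lemma case2 E G c D : SC E G -> c \in E -> D \subset E :\ c ->
  (forall D', D' \proper D -> indepG (c |: G) D') -> (3 < #|D|)%N ->
  ~ spanS G (v c) -> ~ spanS G (sv D) -> spanS G (sv D + v c) ->
  exists f, chordG (c |: G) (E :\ c) D f.
Proof.
move=> HSC cE DEc Dp H4 Hc HDs HDc.
have DE : D \subset E by apply: subset_trans DEc (subsetDl _ _).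
have cD : c \notin D by apply/negP => /(subsetP DEc); rewrite !inE eqxx.
set D' := c |: D.
have D'p : forall Z, Z \proper D' -> indepG G Z.
  move=> Z HZ Y HY HYs.
  have YD' : Y \subset D' := subset_trans HY (proper_sub HZ).
  case cY: (c \in Y).
    set Y' := Y :\ c.
    have Y'D : Y' \subset D.
      apply/subsetP => y; rewrite !inE => /andP[H1 H2]; move: (subsetP YD' y H2).
      by rewrite !inE (negbTE H1).
    have HY's : spanS (c |: G) (sv Y').
      by apply/(spanU1 addxx); right; move: HYs; rewrite (svD1 v cY) addrC.
    case: (Y' =P D) => EY'.
      have : D' \subset Z.
        by apply: subset_trans HY; rewrite -(setD1K cY) -/Y' EY'.
      by move: HZ; rewrite properE => /andP[_ /negP].
    have : Y' \proper D by rewrite properEneq Y'D andbT; apply/eqP.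
    move/Dp => H; have := H Y' (subxx _) HY's => EY0.
    by exfalso; apply: Hc; move: HYs; rewrite (svD1 v cY) -/Y' EY0 sv0 addr0.
  have YD : Y \subset D.
    apply/subsetP => y Hy; move: (subsetP YD' y Hy); rewrite !inE.
    by case/orP => // /eqP E0; rewrite E0 cY in Hy.
  case: (Y =P D) => EY; first by rewrite EY in HYs.
  have : Y \proper D by rewrite properEneq YD andbT; apply/eqP.
  by move/Dp => H; apply: (H Y (subxx _)); apply: spanGc.
have circ : circG G E D'.
  split; first by rewrite subUset sub1set cE DE.
    by rewrite /D' (svU1 v cD) addrC.
  exact: D'p.
have H5 : (3 < #|D'|)%N by rewrite cardsU1 cD; move: H4; clear; lia.
have [f [fE fD' fl fp [A AD' As]]] := HSC D' circ H5.
have fc : f != c by apply/negP => /eqP E0; move: fD'; rewrite E0 !inE eqxx.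
have fD : f \notin D by apply/negP => H; move: fD'; rewrite !inE H orbT.
case: (classic (exists2 d, d \in D & spanS G (v f + v d + v c))) => [[d dD Hd] | Hnd]; last first.
  exists f; split.
  - by rewrite !inE fc fE.
  - exact: fD.
  - move/(spanU1 addxx) => [H|H]; first exact: fl.
    by apply: (fp c) => //; rewrite !inE eqxx.
  - move=> d dD /(spanU1 addxx) [H|H]; last by apply: Hnd; exists d.
    by apply: (fp d) => //; rewrite !inE dD orbT.
  - exists (A :\ c).
      apply/subsetP => y; rewrite !inE => /andP[H1 H2]; move: (subsetP AD' y H2).
      by rewrite !inE (negbTE H1).
    case cA: (c \in A).
      apply/(spanU1 addxx); right; move: As; rewrite (svD1 v cA).
      by rewrite addrCA addrC.
    by rewrite (setD1_notin (negbT cA)); apply: spanGc.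
have fDd : f \notin D :\ d by rewrite !inE negb_and fD orbT.
set C2 := f |: (D :\ d).
have DdD : D :\ d \subset D := subsetDl _ _.
have HDd : sv D = v d + sv (D :\ d) := svD1 v dD.
have C2E : C2 \subset E :\ c.
  by rewrite subUset sub1set !inE fc fE /=; apply: subset_trans DdD DEc.
have Hd' : spanS G (v f + (v d + v c)) by rewrite addrA.
have Hd'' : spanS G ((v d + v c) + v f) by rewrite addrC.
have C2s : spanS G (sv C2).
  rewrite /C2 (svU1 v fDd); apply: (chain Hd').
  by move: HDc; rewrite HDd addrAC.
have HDi : indepG G D by apply: D'p; rewrite properEneq subsetUr andbT; apply/eqP => E0; move: cD; rewrite {1}E0 !inE eqxx.
have C2p : forall Z, Z \proper C2 -> indepG G Z.
  move=> Z HZ Y HY HYs.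
  have YC2 : Y \subset C2 := subset_trans HY (proper_sub HZ).
  case fY: (f \in Y).
    set Y' := Y :\ f.
    have Y'Dd : Y' \subset D :\ d.
      apply/subsetP => y; rewrite !inE => /andP[H1 H2]; move: (subsetP YC2 y H2).
      by rewrite !inE (negbTE H1).
    have dY' : d \notin Y' by apply/negP => /(subsetP Y'Dd); rewrite !inE eqxx.
    set W := d |: Y'.
    have WD : W \subset D by rewrite subUset sub1set dD (subset_trans Y'Dd DdD).
    have HWs : spanS (c |: G) (sv W).
      apply/(spanU1 addxx); right; rewrite /W (svU1 v dY') addrAC.
      by apply: (chain Hd''); move: HYs; rewrite (svD1 v fY).
    case: (W =P D) => EW.
      have : C2 \subset Z.
        apply: subset_trans HY; rewrite -(setD1K fY) -/Y'.
        apply: setUS; apply/subsetP => y; rewrite !inE => /andP[H1 H2].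
        move: H2; rewrite -EW !inE (negbTE H1) //.
      by move: HZ; rewrite properE => /andP[_ /negP].
    have : W \proper D by rewrite properEneq WD andbT; apply/eqP.
    move/Dp => H; have := H W (subxx _) HWs.
    by move/setP => /(_ d); rewrite !inE eqxx.
  have YDd : Y \subset D :\ d.
    apply/subsetP => y Hy; move: (subsetP YC2 y Hy); rewrite !inE.
    by case/orP => // /eqP E0; rewrite E0 fY in Hy.
  have : Y \proper D.
    rewrite properE (subset_trans YDd DdD) /=; apply/negP => /subsetP /(_ d dD).
    by move/(subsetP YDd); rewrite !inE eqxx.
  by move/Dp => H; apply: (H Y (subxx _)); apply: spanGc.
have circ2 : circG G E C2.
  by split => //; apply: subset_trans C2E (subsetDl _ _).
have H42 : (3 < #|C2|)%N.
  by rewrite /C2 cardsU1 fDd; move: H4; rewrite (cardsD1 d D) dD; clear; lia.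
have Hns : forall A, A \subset C2 -> ~ spanS G (v c + sv A).
  move=> A2 A2C2 HA2.
  case fA: (f \in A2).
    set A' := A2 :\ f.
    have A'Dd : A' \subset D :\ d.
      apply/subsetP => y; rewrite !inE => /andP[H1 H2]; move: (subsetP A2C2 y H2).
      by rewrite !inE (negbTE H1).
    have dA' : d \notin A' by apply/negP => /(subsetP A'Dd); rewrite !inE eqxx.
    have := HDi (d |: A'); rewrite (svU1 v dA').
    have H1 : spanS G (v d + sv A').
      apply: (chain (y := v f + v c)).
        by move: Hd; rewrite addrAC addrC.
      by move: HA2; rewrite (svD1 v fA) addrCA addrA.
    have HW : d |: A' \subset D by rewrite subUset sub1set dD (subset_trans A'Dd DdD).
    by move=> /(_ HW H1) /setP /(_ d); rewrite !inE eqxx.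
  have A2Dd : A2 \subset D :\ d.
    apply/subsetP => y Hy; move: (subsetP A2C2 y Hy); rewrite !inE.
    by case/orP => // /eqP E0; rewrite E0 fA in Hy.
  have cA2 : c \notin A2 by apply/negP => /(subsetP A2Dd) /(subsetP DdD) H; rewrite H in cD.
  have : c |: A2 \proper D'.
    rewrite properE /D' setUS ?(subset_trans A2Dd DdD) //=.
    apply/negP => /subsetP /(_ d); rewrite !inE dD orbT => /(_ isT).
    case/orP => [/eqP E0|]; first by move: cD; rewrite -E0 dD.
    by move/(subsetP A2Dd); rewrite !inE eqxx.
  move/D'p => H; have := H (c |: A2) (subxx _); rewrite (svU1 v cA2) => /(_ HA2).
  by move/setP => /(_ c); rewrite !inE eqxx.
have [f2 [f2E f2C2 f2l f2p [A2 A2C2 A2s]]] := case1 Hc HSC C2E circ2 H42 Hns.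
have Hfd : spanS (c |: G) (v d + v f).
  by apply/(spanU1 addxx); right; move: Hd; rewrite [v f + v d]addrC.
have fC2 : f \in C2 by rewrite !inE eqxx.
exists f2; split => //.
- apply/negP => f2D; case: (f2 =P d) => E0.
    by apply: (f2p f fC2); rewrite E0.
  by move/negP: f2C2; apply; rewrite !inE f2D andbT; apply/orP; right; apply/eqP.
- move=> d' d'D; case: (d' =P d) => [->|E0].
    move=> H; apply: (f2p f fC2); exact: chain H Hfd.
  by apply: f2p; rewrite !inE d'D andbT; apply/orP; right; apply/eqP.
- case fA2: (f \in A2).
    set A3 := A2 :\ f.
    have A3Dd : A3 \subset D :\ d.
      apply/subsetP => y; rewrite !inE => /andP[H1 H2]; move: (subsetP A2C2 y H2).
      by rewrite !inE (negbTE H1).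
    have dA3 : d \notin A3 by apply/negP => /(subsetP A3Dd); rewrite !inE eqxx.
    exists (d |: A3); first by rewrite subUset sub1set dD (subset_trans A3Dd DdD).
    rewrite (svU1 v dA3).
    have E1 : v f2 + sv A2 = (v f2 + sv A3) + v f by rewrite (svD1 v fA2) addrAC -addrA.
    have H1 : spanS (c |: G) ((v f2 + sv A3) + v f) by rewrite -E1.
    by have := chain H1 (spanC Hfd); rewrite addrAC -addrA.
  exists A2 => //.
  apply/subsetP => y Hy; move: (subsetP A2C2 y Hy); rewrite !inE.
  case/orP => [/eqP E0|/andP[_ //]]; by rewrite E0 fA2 in Hy.
Qed.

Lemma SC_contr1 E G c : SC E G -> c \in E -> SC (E :\ c) (c |: G).
Proof.
move=> HSC cE D [DEc Ds Dp] H4.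
have DE : D \subset E by apply: subset_trans DEc (subsetDl _ _).
have cD : c \notin D by apply/negP => /(subsetP DEc); rewrite !inE eqxx.
case: (classic (spanS G (v c))) => Hc.
  have Hi : forall Y, indepG (c |: G) Y -> indepG G Y.
    by move=> Y HY Z HZ HZs; apply: HY => //; apply/(spanL _ Hc).
  have [f [fE fD fl fp [A AD As]]] : exists f, chordG G E D f.
    apply: HSC => //; split => //; first by apply/(spanL _ Hc).
    by move=> D' HD'; apply: Hi; apply: Dp.
  have fc : f != c by apply/eqP => E0; apply: fl; rewrite E0.
  exists f; split => //; first by rewrite !inE fc fE.
  - by move/(spanL _ Hc).
  - by move=> d dD /(spanL _ Hc); apply: fp.
  - by exists A => //; apply/(spanL _ Hc).
case: (classic (spanS G (sv D))) => HDs.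
  apply: case1 => //.
    split => // D' HD'; apply: (indepG_mon (subsetUr [set c] G)); exact: Dp.
  move=> A AD HA.
  case A0: (A == set0).
    by move/eqP: A0 HA => ->; rewrite sv0 addr0.
  case AD': (A == D).
    by move/eqP: AD' HA => -> HA; apply: Hc; exact: (spanDl addxx HDs HA).
  have : A \proper D by rewrite properEneq AD' AD.
  move/Dp => HAi; have := HAi A (subxx _).
  have HA' : spanS (c |: G) (sv A) by apply/(spanU1 addxx); right; rewrite addrC.
  by move=> /(_ HA') /eqP; rewrite A0.
apply: case2 => //.
by case/(spanU1 addxx): Ds.
Qed.

Lemma SC_contr E G C : C \subset E -> SC E G -> SC (E :\: C) (C :|: G).
Proof.
elim/set_induction: C => [|x X xX IH] CE HSC; first by rewrite setD0 set0U.
have XE : X \subset E by apply: subset_trans CE; apply: subsetUr.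
have xE : x \in E :\: X by rewrite inE xX (subsetP CE x (setU11 _ _)).
have := SC_contr1 (IH XE HSC) xE.
have -> : (E :\: X) :\ x = E :\: (x |: X) by rewrite setDDl setUC.
by rewrite setUA.
Qed.

Lemma SC_flat E I G F : rep E I G -> flat E I F -> SC E G -> SC F G.
Proof.
move=> HR Hfl HSC D [DF Ds Dp] H4.
have FE := Hfl.1.
have [f [fE fD fl fp [A AD As]]] := HSC D (And3 (subset_trans DF FE) Ds Dp) H4.
exists f; split => //; last by exists A.
exact: (flat_closed addxx HR Hfl fE (subset_trans AD DF) As).
Qed.

Lemma pair_sub (Y : {set T}) f g : Y \subset [set f; g] ->
  [\/ Y = set0, Y = [set f], Y = [set g] | Y = [set f; g]].
Proof.
move=> HY; case fY: (f \in Y); case gY: (g \in Y).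
- by constructor 4; apply/eqP; rewrite eqEsubset HY /= subUset !sub1set fY gY.
- constructor 2; apply/setP => y; rewrite inE; apply/idP/idP => [Hy|/eqP ->//].
  by move: (subsetP HY y Hy); rewrite !inE; case/orP => // /eqP E0; rewrite E0 gY in Hy.
- constructor 3; apply/setP => y; rewrite inE; apply/idP/idP => [Hy|/eqP ->//].
  by move: (subsetP HY y Hy); rewrite !inE; case/orP => // /eqP E0; rewrite E0 fY in Hy.
- constructor 1; apply/setP => y; rewrite inE; apply/negP => Hy.
  by move: (subsetP HY y Hy); rewrite !inE; case/orP => /eqP E0; rewrite E0 ?fY ?gY in Hy.
Qed.

Lemma sv2 f g : f != g -> sv [set f; g] = v f + v g.
Proof. by move=> H; rewrite (svU1 v (_ : f \notin [set g])) ?sv1 // inE. Qed.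

Lemma SC_simpl E2 I2 G2 S : rep E2 I2 G2 -> SC E2 G2 -> simplification_set E2 I2 S -> SC S G2.
Proof.
move=> HR HSC [SE Sl Sp Sr] D [DS Ds Dp] H4.
have [f [fE fD fl fp [A AD As]]] := HSC D (And3 (subset_trans DS SE) Ds Dp) H4.
case fS: (f \in S); first by exists f; split => //; exists A.
have fnl : ~ loop E2 I2 f.
  move=> [_ /negP H]; apply: H; apply/HR; split; first by rewrite sub1set.
  by apply/indep1.
have [g gS [/and3P [_ gE fg] If Ig Ifg]] := Sr f fE fnl (negbT fS).
have gl : ~ spanS G2 (v g) by move/HR: Ig => [_ /indep1].
have Hfg : spanS G2 (v f + v g).
  apply: NNPP => Hn; move/negP: Ifg; apply; apply/HR; split.
    by rewrite subUset !sub1set fE gE.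
  move=> Y /pair_sub [->|->|->|->] //; rewrite ?sv1 ?(sv2 fg) //.
exists g; split => //.
- apply/negP => gD; exact: (fp g gD).
- move=> d dD H; apply: (fp d dD); exact: chain Hfg H.
- exists A => //; apply: (chain (spanC Hfg) As).
Qed.

Lemma SC_final E I G : rep E I G -> SC E G -> isU34 E I -> False.
Proof.
move=> HR HSC [H4 HU].
have HE : ~ indepG G E.
  move=> Hi; have : I E by apply/HR.
  by rewrite (HU E (subxx _)) H4.
have HD : circG G E E.
  split => //.
    have [Y [HY HYs HY0]] := not_indepG HE.
    case: (Y =P E) => [<- //|EY].
    have : I Y.
      rewrite (HU Y HY); have : Y \proper E by rewrite properEneq HY andbT; apply/eqP.
      by move/proper_card; rewrite H4.
    by move/HR => [_ /(_ Y (subxx _) HYs) /eqP]; rewrite (negbTE HY0).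
  move=> D' HD'; have : I D'.
    by rewrite (HU D' (proper_sub HD')); move/proper_card: HD'; rewrite H4.
  by move/HR => [].
have H3 : (3 < #|E|)%N by rewrite H4.
have [f [fE fD _ _ _]] := HSC E HD H3.
by rewrite fE in fD.
Qed.

Lemma SC_minor E I G0 E' I' : rep E I G0 -> SC E G0 -> induced_minor E I E' I' ->
  exists G, rep E' I' G /\ SC E' G.
Proof.
move=> HR HSC; elim => [|E1 I1 F _ [G [HR1 HSC1]] Hfl|E1 I1 C S _ [G [HR1 HSC1]] CE1 Hs].
- by exists G0.
- exists G; split; first exact: restr_rep HR1 Hfl.1.
  exact: SC_flat HR1 Hfl HSC1.
- exists (C :|: G).
  have HR2 := contr_rep addxx HR1 CE1.
  split; first by apply: (restr_rep HR2); case: Hs.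
  exact: SC_simpl HR2 (SC_contr CE1 HSC1) Hs.
Qed.

End SCsec.


Section Fin.
Variable T : finType.
Variable V : zmodType.
Hypothesis addxx : forall x : V, (x + x = 0)%R.
Variable v : T -> V.
Local Notation sv := (sv v).
Local Notation spanS := (spanS v).
Local Notation indepG := (indepG v).
Local Notation rep := (rep v).
Local Notation SC := (SC v).
Implicit Types (A B C D E F G K S X Y Z : {set T}) (I : {set T} -> bool).


Lemma circ_span E I G C : rep E I G -> circuit E I C -> spanS G (sv C).
Proof.
move=> HR [CE /negP HC Hp].
have HE : ~ indepG G C by move=> Hi; apply: HC; apply/HR.
have [Y [HY HYs HY0]] := not_indepG HE.
case: (Y =P C) => [<- //|EY].
have : Y \proper C by rewrite properEneq HY andbT; apply/eqP.
by move/Hp/HR => [_ /(_ Y (subxx _) HYs) /eqP]; rewrite (negbTE HY0).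
Qed.

Lemma nonloop E I e : simple E I -> e \in E -> I [set e].
Proof. by move=> [Hl _] eE; apply: NNPP => H; apply: (Hl e); split => //; apply/negP. Qed.

Lemma SC_init E I : rep E I set0 -> simple E I -> chordal E I -> SC E set0.
Proof.
move=> HR Hs Hch D [DE Ds Dp] H4.
have Hcirc : circuit E I D.
  split => //.
    apply/negP => /HR [_ Hi]; have := Hi D (subxx _) Ds => E0.
    by move: H4; rewrite E0 cards0.
  move=> D' HD'; apply/HR; split; last exact: Dp.
  exact: subset_trans (proper_sub HD') DE.
have [C1 [C2 [e [HC1 HC2 HI HD]]]] := Hch D Hcirc H4.
have eC1 : e \in C1 by move/setP: HI => /(_ e); rewrite !inE eqxx => /andP[].
have eE : e \in E by case: HC1 => /subsetP H _ _; apply: H.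
have eD : e \notin D by rewrite HD !inE eqxx.
have Ie := nonloop Hs eE.
exists e; split => //.
- by move/HR: Ie => [_ /indep1].
- move=> d dD H.
  have dE : d \in E := subsetP DE d dD.
  have ed : e != d by apply/eqP => E0; rewrite E0 dD in eD.
  have Ied : I [set e; d].
    apply: NNPP => Hn; case: (Hs) => _ /(_ e d); apply; split => //.
    - by rewrite eE dE ed.
    - exact: nonloop Hs dE.
    - by apply/negP.
  move/HR: Ied => [_ /(_ _ (subxx _))]; rewrite (sv2 v ed) => /(_ H).
  by move/setP => /(_ e); rewrite !inE eqxx.
- exists (C1 :\ e).
    rewrite HD; apply/subsetP => x; rewrite !inE => /andP[-> ->] //.
  by rewrite -(svD1 v eC1); apply: circ_span HR HC1.
Qed.

Lemma key_indep E I C e c : rep E I set0 -> simple E I -> circuit E I C -> e \in E ->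
  e \notin C -> c \in C ->
  ~ (exists C1 C2 e', [/\ circuit E I C1, circuit E I C2, C1 :&: C2 = [set e'] &
       C = (C1 :|: C2) :\ e']) -> I (e |: (C :\ c)).
Proof.
move=> HR Hs HC eE eC cC Hno.
have [CE _ Cp] := HC.
set Y := e |: (C :\ c).
have YE : Y \subset E by rewrite subUset sub1set eE; apply: subset_trans (subsetDl _ _) CE.
have CcC : C :\ c \proper C by apply: properD1.
apply: NNPP => HnI.
have HnY : ~ indepG set0 Y by move=> Hi; apply: HnI; apply/HR.
have [Z [ZY Z0 Zs Zp]] := circ_extract HnY.
have ZE : Z \subset E := subset_trans ZY YE.
have eZ : e \in Z.
  apply: NNPP => /negP eZ; move/negP: Z0; apply; apply/eqP.
  have ZCc : Z \subset C :\ c.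
    apply/subsetP => z Hz; move: (subsetP ZY z Hz); rewrite !inE.
    by case/orP => // /eqP E0; rewrite -E0 Hz in eZ.
  by move/HR: (Cp _ CcC) => [_ /(_ Z ZCc Zs)].
have Ie := nonloop Hs eE.
have el : ~ spanS set0 (v e) by move/HR: Ie => [_ /indep1].
have ZC : Z :\ e \subset C.
  apply/subsetP => z; rewrite !inE => /andP[H1 H2]; move: (subsetP ZY z H2).
  by rewrite !inE (negbTE H1) /= => /andP[].
have Ze0 : Z :\ e != set0.
  apply/negP => /eqP H; apply: el; move: Zs; rewrite (svD1 v eZ) H sv0 addr0 //.
set C2 := e |: (C :\: Z).
have eCZ : e \notin C :\: Z by rewrite inE negb_and eC orbT.
have CZC : C :\: Z \proper C.
  rewrite properE subsetDl /=; apply/negP => H.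
  move/set0Pn: Ze0 => [z Hz]; move: (subsetP H z (subsetP ZC z Hz)).
  by move: Hz; rewrite !inE => /andP[_ ->].
have CIZ : C :&: Z = Z :\ e.
  apply/setP => z; rewrite !inE; apply/idP/idP.
    by move=> /andP[zC ->]; rewrite andbT; apply/eqP => E0; rewrite -E0 zC in eC.
  by move=> /andP[H1 H2]; rewrite H2 andbT; move: (subsetP ZY z H2); rewrite !inE (negbTE H1) => /andP[].
have Cs := circ_span HR HC.
have C2s : spanS set0 (sv C2).
  have E0 : sv C2 = (sv C + sv Z)%R.
    rewrite /C2 (svU1 v eCZ) (svID v C Z) CIZ (svD1 v eZ).
    by rewrite [(sv (Z :\ e) + _)%R]addrC addrACA addxx addr0 addrC.
  by rewrite E0; apply: spanD.
have HC1 : circuit E I Z.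
  split => //.
    by apply/negP => /HR [_ /(_ Z (subxx _) Zs) /eqP]; rewrite (negbTE Z0).
  move=> D' HD'; apply/HR; split; first exact: subset_trans (proper_sub HD') ZE.
  exact: Zp.
have HC2 : circuit E I C2.
  have C2E : C2 \subset E by rewrite subUset sub1set eE; apply: subset_trans (proper_sub CZC) CE.
  split => //.
    apply/negP => /HR [_ /(_ C2 (subxx _) C2s)] /setP /(_ e).
    by rewrite !inE eqxx.
  move=> D' HD'; apply/HR; split; first exact: subset_trans (proper_sub HD') C2E.
  move=> Y' HY' HY's; apply: NNPP => /eqP Y'0.
  case eY': (e \in Y').
    set W := (Y' :\ e) :|: (Z :\ e).
    have Y'eCZ : Y' :\ e \subset C :\: Z.
      apply/subsetP => y; rewrite !inE => /andP[H1 H2].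
      move: (subsetP (subset_trans HY' (proper_sub HD')) y H2).
      by rewrite !inE (negbTE H1).
    have WC : W \subset C by rewrite subUset ZC (subset_trans Y'eCZ (subsetDl _ _)).
    have Wdis : [disjoint Y' :\ e & Z :\ e].
      rewrite -setI_eq0; apply/eqP/setP => y; rewrite !inE.
      apply/negP => /andP[/andP[H1 H2] /andP[_ H3]]; move: (subsetP Y'eCZ y).
      by rewrite !inE H1 H2 H3 => /(_ isT).
    have Ws : spanS set0 (sv W).
      have E0 : sv W = (sv Y' + sv Z)%R.
        rewrite /W (svU v Wdis) (svD1 v eY') (svD1 v eZ).
        by rewrite addrACA addxx add0r.
      by rewrite E0; apply: spanD.
    case: (W =P C) => EW.
      have : C2 \subset D'.
        apply: subset_trans HY'; rewrite subUset sub1set eY' /=.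
        apply/subsetP => y; rewrite !inE => /andP[yZ yC].
        move: yC; rewrite -EW !inE => /orP[/andP[_ ->]//|/andP[_ H]]; by rewrite H in yZ.
      by move: HD'; rewrite properE => /andP[_ /negP].
    have : W \proper C by rewrite properEneq WC andbT; apply/eqP.
    move/Cp/HR => [_ /(_ W (subxx _) Ws)] /eqP.
    rewrite setU_eq0 => /andP[_]; exact/negP.
  have Y'CZ : Y' \subset C :\: Z.
    apply/subsetP => y Hy; move: (subsetP (subset_trans HY' (proper_sub HD')) y Hy).
    by rewrite !inE; case/orP => // /eqP E0; rewrite E0 eY' in Hy.
  move: (Cp _ (sub_proper_trans Y'CZ CZC)) => /HR [_ /(_ Y' (subxx _) HY's)].
  by move/eqP; rewrite (negbTE Y'0).
apply: Hno; exists Z, C2, e; split => //.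
  apply/setP => z; rewrite !inE; apply/idP/idP; last by move/eqP ->; rewrite eZ eqxx.
  by move=> /andP[zZ /orP[//|/andP[/negP]]].
apply/setP => z; rewrite !inE; apply/idP/idP.
  move=> zC; have -> : z != e by apply/eqP => E0; rewrite -E0 zC in eC.
  by rewrite zC /=; case: (z \in Z); rewrite ?orbT.
move=> /andP[ze /orP[zZ|/orP[/eqP E0|/andP[_ //]]]]; last by rewrite E0 eqxx in ze.
by move: (subsetP ZY z zZ); rewrite !inE (negbTE ze) => /andP[].
Qed.

Lemma card_sub_exists A k : (k <= #|A|)%N -> exists2 B : {set T}, B \subset A & #|B| = k.
Proof.
elim/set_induction: A k => [|x X xX IH] k Hk.
  by exists set0 => //; move: Hk; rewrite cards0 leqn0 => /eqP ->.
move: Hk; rewrite cardsU1 xX add1n leq_eqVlt => /orP[/eqP ->|Hk].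
  by exists (x |: X) => //; rewrite cardsU1 xX.
have [B HB HBc] := IH k Hk; exists B => //; apply: subset_trans HB (subsetUr _ _).
Qed.

Lemma notchordal_minor E I : rep E I set0 -> simple E I -> ~ chordal E I ->
  exists E' I', induced_minor E I E' I' /\ isU34 E' I'.
Proof.
move=> HR Hs Hnc.
have [C [HC H4 Hno]] : exists C, [/\ circuit E I C, (4 <= #|C|)%N &
  ~ (exists C1 C2 e', [/\ circuit E I C1, circuit E I C2, C1 :&: C2 = [set e'] &
       C = (C1 :|: C2) :\ e'])].
  apply: NNPP => H; apply: Hnc => C HC H4; apply: NNPP => H'; apply: H; exists C; split => //.
have [CE /negP CnI Cp] := HC.
set I1 := restr I C.
have rk_prop : forall Z, Z \proper C -> rk I1 Z = #|Z|.
  move=> Z HZ; apply/anti_leq/andP; split.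
    by apply: rk_le => Y HY _; apply: subset_leq_card.
  by apply: rk_ge => //; rewrite /I1 /restr (Cp Z HZ) (proper_sub HZ).
have rk_full : (rk I1 C < #|C|)%N.
  have : (rk I1 C <= #|C|.-1)%N.
    apply: rk_le => Y HY /andP[IY _].
    have : Y \proper C by rewrite properEneq HY andbT; apply/eqP => E0; apply: CnI; rewrite -E0.
    by move/proper_card; move: H4; clear; lia.
  by move: H4; clear; lia.
have Hflat : flat E I C.
  split => // e; rewrite inE => /andP[eC eE].
  have [c cC] : exists c, c \in C.
    by apply/set0Pn; apply/negP => /eqP E0; move: H4; rewrite E0 cards0.
  have HI := key_indep HR Hs HC eE eC cC Hno.
  have eCc : e \notin C :\ c by rewrite inE negb_and eC orbT.
  have : (#|C| <= rk I (e |: C))%N.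
    have := rk_ge (setUS [set e] (subsetDl C [set c])) HI.
    by rewrite cardsU1 eCc (cardsD1 c C) cC.
  have : (rk I C <= #|C|.-1)%N.
    apply: rk_le => Y HY IY.
    have : Y \proper C by rewrite properEneq HY andbT; apply/eqP => E0; apply: CnI; rewrite -E0.
    by move/proper_card; move: H4; clear; lia.
  by move: H4; clear; lia.
have [S4 S4C S4c] := card_sub_exists (leq_trans (leqnn 4) H4).
set C0 := C :\: S4.
have C0C : C0 \subset C := subsetDl _ _.
have HS : C :\: C0 = S4.
  apply/setP => x; rewrite /C0 !inE; case xS: (x \in S4); last by case: (x \in C).
  by rewrite (subsetP S4C x xS).
have cardC : #|C| = 4 + #|C0| by rewrite -(cardsID S4 C) (setIidPr S4C) S4c.
set I2 := contr C I1 C0.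
have HI2 : forall X, X \subset S4 -> I2 X = (#|X| <= 3)%N.
  move=> X XS; rewrite /I2 /contr HS XS /=.
  have dis : [disjoint X & C0].
    rewrite -setI_eq0; apply/eqP/setP => y; rewrite !inE.
    by apply/negP => /andP[/(subsetP XS) -> /andP[/negP]].
  have cXC : #|X :|: C0| = #|X| + #|C0|.
    by rewrite -cardsUI (disjoint_setI0 dis) cards0 addn0.
  have XC : X :|: C0 \subset C by rewrite subUset C0C (subset_trans XS S4C).
  have C0p : C0 \proper C by rewrite properE C0C /=; apply/negP => H; move: (subset_leq_card H); rewrite cardC; clear; lia.
  rewrite (rk_prop _ C0p).
  case: (X :|: C0 =P C) => EXC.
    rewrite EXC; have : #|X| = 4 by move: cXC; rewrite EXC cardC; clear; lia.
    move=> ->; apply/negP => /eqP; move: rk_full; rewrite cardC; clear; lia.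
  have HXp : X :|: C0 \proper C by rewrite properEneq XC andbT; apply/eqP.
  rewrite (rk_prop _ HXp) cXC eqxx.
  symmetry; have : (#|X| <= 4)%N by rewrite -S4c; apply: subset_leq_card.
  rewrite leq_eqVlt => /orP[/eqP HX4|//].
  exfalso; apply: EXC; apply/eqP; rewrite eqEcard XC /= cXC HX4 cardC //.
exists S4, (restr I2 S4); split.
  have Hm : induced_minor E I C I1 by apply: im_flat (im_refl E I) Hflat.
  apply: (im_contr Hm C0C).
  rewrite HS; split => //.
  - move=> e eS [_ /negP]; apply; rewrite -/I2 HI2 ?cards1 // sub1set //.
  - move=> e f eS fS [_ _ _ /negP]; apply; rewrite -/I2 HI2; last by rewrite subUset !sub1set eS fS.
    by rewrite cardsU1 cards1; case: (_ \notin _).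
  - by move=> e eS _ /negP.
split => // X XS; rewrite /restr XS andbT; exact: HI2.
Qed.

End Fin.


Unset Implicit Arguments.

Theorem lemma3p8 (T : finType) (E : {set T}) (I : {set T} -> bool) :
  is_matroid E I -> simple E I -> binary E I ->
  (chordal E I <->
   ~ exists (E' : {set T}) (I' : {set T} -> bool),
       induced_minor E I E' I' /\ isU34 E' I').
Proof.
move=> [Hsub _ _ _] Hs [n [v Hv]].
have HR : rep v E I set0.
  move=> X; split.
    move=> IX; have XE := Hsub X IX; split => //; apply/freeF2; rewrite -(Hv X XE) //.
  by move=> [XE Hi]; rewrite (Hv X XE); apply/freeF2.
split.
  move=> Hch [E' [I' [Hm HU]]].
  have HSC := SC_init HR Hs Hch.
  have [G [HR' HSC']] := SC_minor (@F2_addxx n) HR HSC Hm.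
  exact: SC_final HR' HSC' HU.
move=> Hn; apply: NNPP => Hnc; apply: Hn; by move: (notchordal_minor (@F2_addxx n) HR Hs Hnc).
Qed.
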